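(* Let $G$ be a graph on $d+2$ vertices with adjacency matrix $A_G$ having eigenvalues $\lambda_1\geq\lambda_2\geq\dots\geq\lambda_{d+2}$, and let $k>1$ with $\overline{B_G}=\frac{1}{k^2-1}I-A_G$. Suppose that $w^T\overline{B_G}w\geq 0$ for all $w\in\mathbf{1}^\perp$, that there exist a nonzero $w\in\mathbf{1}^\perp$ and a real $\gamma$ with $\overline{B_G}w=\gamma\mathbf{1}$, and that $\det(\overline{B_G})=0$. If $\lambda_1>\lambda_2$, then every eigenvector of $A_G$ with eigenvalue $\lambda_2$ lies in $\mathbf{1}^\perp$. If $\lambda_1=\lambda_2$, then a basis of the $\lambda_2$-eigenspace of $A_G$ can be chosen so that all but one of its vectors lie in $\mathbf{1}^\perp$.
   Context: Graphs are finite and simple; $\mathbf{1}$ is the all-ones vector and $\mathbf{1}^\perp$ its orthogonal complement. *)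

(* Defs.v *)
From HB Require Import structures.
From mathcomp Require Import all_boot all_order all_algebra.
From mathcomp Require Import reals.
Set Implicit Arguments. Unset Strict Implicit. Unset Printing Implicit Defensive.
Import Order.TTheory GRing.Theory Num.Theory.
Local Open Scope ring_scope.

Definition simple_graph (n : nat) (e : rel 'I_n) : Prop :=
  symmetric e /\ irreflexive e.

Definition adjmx (R : nzRingType) (n : nat) (e : rel 'I_n) : 'M[R]_n :=
  \matrix_(i, j) (e i j)%:R.

Definition ones (R : nzRingType) (n : nat) : 'rV[R]_n := const_mx 1.
Definition in_ones_perp (R : nzRingType) (n : nat) (w : 'rV[R]_n) : bool :=
  \sum_i w 0 i == 0.

(* Quadratic form w^T M w (vectors are row vectors, so this is w M w^T). *)
Definition qform (R : nzRingType) (n : nat) (M : 'M[R]_n) (w : 'rV[R]_n) : R :=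
  (w *m M *m w^T) 0 0.

Definition Bbar (R : realType) (n : nat) (e : rel 'I_n) (k : R) : 'M[R]_n :=
  (k ^+ 2 - 1)^-1%:M - adjmx R e.

(* Main.v *)
Require Import Defs.
From HB Require Import structures.
From mathcomp Require Import all_boot all_order all_algebra.
From mathcomp Require Import reals.
From mathcomp Require Import ring lra.
Import Order.TTheory GRing.Theory Num.Theory.
Local Open Scope ring_scope.

Set Implicit Arguments. Unset Strict Implicit. Unset Printing Implicit Defensive.


Section Aux.
Variable R : realFieldType.

Definition dot n (u v : 'rV[R]_n) : R := (u *m v^T) 0 0.

Lemma dotE n (u v : 'rV[R]_n) : dot u v = \sum_i u 0 i * v 0 i.
Proof. by rewrite /dot mxE; apply: eq_bigr => i _; rewrite mxE. Qed.

Lemma dotC n (u v : 'rV[R]_n) : dot u v = dot v u.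
Proof. by rewrite !dotE; apply: eq_bigr => i _; rewrite mulrC. Qed.

Lemma dot_ge0 n (u : 'rV[R]_n) : 0 <= dot u u.
Proof. by rewrite dotE; apply: sumr_ge0 => i _; rewrite -expr2 sqr_ge0. Qed.

Lemma dot_eq0 n (u : 'rV[R]_n) : dot u u = 0 -> u = 0.
Proof.
rewrite dotE; under eq_bigr do rewrite -expr2; move=> H; apply/rowP => i; rewrite mxE.
have : u 0 i ^+ 2 = 0.
  by apply: (psumr_eq0P (P := predT) (F := fun i => u 0 i ^+ 2)) => // j _; rewrite sqr_ge0.
by move/eqP; rewrite sqrf_eq0 => /eqP.
Qed.

Lemma dotDl n (u v w : 'rV[R]_n) : dot (u + v) w = dot u w + dot v w.
Proof. by rewrite /dot mulmxDl mxE. Qed.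
Lemma dotZl n a (u w : 'rV[R]_n) : dot (a *: u) w = a * dot u w.
Proof. by rewrite /dot -scalemxAl mxE. Qed.
Lemma dotDr n (u v w : 'rV[R]_n) : dot w (u + v) = dot w u + dot w v.
Proof. by rewrite dotC dotDl !(dotC w). Qed.
Lemma dotZr n a (u w : 'rV[R]_n) : dot w (a *: u) = a * dot w u.
Proof. by rewrite dotC dotZl dotC. Qed.
Lemma dotNl n (u w : 'rV[R]_n) : dot (- u) w = - dot u w.
Proof. by rewrite -scaleN1r dotZl mulN1r. Qed.
Lemma dotNr n (u w : 'rV[R]_n) : dot w (- u) = - dot w u.
Proof. by rewrite dotC dotNl dotC. Qed.
Lemma dot0l n (w : 'rV[R]_n) : dot 0 w = 0.
Proof. by rewrite /dot mul0mx mxE. Qed.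
Lemma dot0r n (w : 'rV[R]_n) : dot w 0 = 0.
Proof. by rewrite dotC dot0l. Qed.

Lemma dotA n (u v : 'rV[R]_n) (A : 'M[R]_n) : A^T = A ->
  dot (u *m A) v = dot u (v *m A).
Proof. by move=> sA; rewrite /dot trmx_mul sA mulmxA. Qed.

Lemma eig_orth n (A : 'M[R]_n) (u v : 'rV[R]_n) a b : A^T = A ->
  u *m A = a *: u -> v *m A = b *: v -> a != b -> dot u v = 0.
Proof.
move=> sA uA vA ab; have := dotA u v sA; rewrite uA vA dotZl dotZr => /eqP.
by rewrite -subr_eq0 -mulrBl mulf_eq0 subr_eq0 (negPf ab) /= => /eqP.
Qed.

Lemma trmx_expS n (S : 'M[R]_n.+1) k : S^T = S -> (S ^+ k)^T = S ^+ k.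
Proof.
move=> sS; elim: k => [|k IH]; first by rewrite !expr0 trmx1.
by rewrite exprS -mulmxE trmx_mul IH sS mulmxE -exprSr exprS.
Qed.

Lemma nil_sym n (S : 'M[R]_n.+1) (x : 'rV[R]_n.+1) m : S^T = S ->
  x *m S ^+ m.+1 = 0 -> x *m S = 0.
Proof.
move=> sS; elim: m => [|m IH]; first by rewrite expr1.
move=> H; apply: IH; apply: dot_eq0.
rewrite /dot trmx_mul trmx_expS // mulmxA -[x *m _ *m _]mulmxA mulmxE -exprD.
rewrite (_ : (m.+1 + m.+1 = m.+2 + m)%N); last by rewrite addnS addSn.
by rewrite exprD -mulmxE mulmxA H !mul0mx mxE.
Qed.

End Aux.


Section Ray.
Variable R : realFieldType.

Lemma dot_suml n (I : finType) (f : I -> 'rV[R]_n) w :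
  dot (\sum_i f i) w = \sum_i dot (f i) w.
Proof.
by rewrite (big_morph (fun x => dot x w) (fun a b => dotDl a b w) (dot0l w)).
Qed.
Lemma dot_sumr n (I : finType) (f : I -> 'rV[R]_n) w :
  dot w (\sum_i f i) = \sum_i dot w (f i).
Proof.
by rewrite (big_morph (fun x => dot w x) (fun a b => dotDr a b w) (dot0r w)).
Qed.

Lemma coprimep_prodr (p : {poly R}) (I : Type) (r : seq I) (P : pred I) G :
  (forall j, P j -> coprimep p (G j)) -> coprimep p (\prod_(j <- r | P j) G j).
Proof.
move=> H; apply: (big_ind (fun q => coprimep p q)) => //.
- by rewrite coprimep1.
- by move=> x y hx hy; rewrite coprimepMr hx hy.
Qed.

Lemma rayleigh n (A : 'M[R]_n.+1) (lam : 'I_n.+1 -> R) mu :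
  A^T = A -> char_poly A = \prod_i ('X - (lam i)%:P) -> (forall i, lam i <= mu) ->
  forall u : 'rV_n.+1, dot (u *m A) u <= mu * dot u u.
Proof.
move=> sA cA lemu u.
pose rep j := odflt j [pick k | lam k == lam j].
have lam_rep j : lam (rep j) = lam j.
  by rewrite /rep; case: pickP => [k /eqP|] //.
have rep_eq j j' : lam j = lam j' -> rep j = rep j'.
  move=> e; rewrite /rep (@eq_pick _ _ (fun k => lam k == lam j')); last first.
    by move=> k; rewrite e.
  case: pickP => [k _|H] //; by move: (H j'); rewrite eqxx.
pose F i := \prod_(j | rep j == i) ('X - (lam j)%:P).
have cF : char_poly A = \prod_i F i.
  by rewrite cA (partition_big rep predT).
have cop : {in predT &, forall i k, k != i -> coprimep (F i) (F k)}.
  move=> i k _ _ ki; rewrite /F coprimep_sym.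
  apply: coprimep_prodr => j' /eqP rj'; rewrite coprimep_sym.
  apply: coprimep_prodr => j /eqP rj; rewrite coprimep_XsubC root_XsubC.
  apply/negP => /eqP e; move: ki; rewrite -rj -rj' (rep_eq j' j) ?eqxx //.
have full : (u <= \sum_i kermxpoly A (F i))%MS.
  rewrite -(kermxpoly_prod _ cop) -cF /kermxpoly Cayley_Hamilton kermx0.
  exact: submx1.
move/sub_sumsmxP: full => [u_ Hu].
pose v i := u_ i *m kermxpoly A (F i).
have vK i : v i *m horner_mx A (F i) = 0.
  by apply/sub_kermxP; rewrite /v submxMl.
have veig i : v i *m A = lam i *: v i.
  have [m Fm] : exists m, F i = ('X - (lam i)%:P) ^+ m.
    rewrite /F; apply: (big_ind (fun p => exists m, p = _ ^+ m)).
    - by exists 0%N; rewrite expr0.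
    - by move=> p q [a ->] [b ->]; exists (a + b)%N; rewrite exprD.
    - by move=> j /eqP <-; exists 1%N; rewrite expr1 lam_rep.
  have := vK i; rewrite Fm rmorphXn rmorphB /= horner_mx_X horner_mx_C.
  case: m {Fm} => [|m].
    by rewrite expr0 mulmx1 => ->; rewrite mul0mx scaler0.
  move/nil_sym; rewrite linearB /= sA tr_scalar_mx => /(_ erefl).
  by rewrite mulmxBr mul_mx_scalar => /eqP; rewrite subr_eq0 => /eqP.
have vnz i : v i != 0 -> exists j, rep j = i.
  move=> nz; case: (pickP (fun j => rep j == i)) => [j /eqP e|H]; first by exists j.
  have := vK i; rewrite /F big_pred0 // rmorph1 mulmx1 => v0.
  by rewrite v0 eqxx in nz.
have orth i k : i != k -> dot (v i) (v k) = 0.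
  move=> ik; have [->|nzi] := eqVneq (v i) 0; first by rewrite dot0l.
  have [->|nzk] := eqVneq (v k) 0; first by rewrite dot0r.
  apply: (eig_orth sA (veig i) (veig k)); apply/eqP => e.
  have [j rj] := vnz i nzi; have [j' rj'] := vnz k nzk.
  move: ik; rewrite -rj -rj' (rep_eq j j') ?eqxx //.
  by rewrite -lam_rep rj e -rj' lam_rep.
have D i : \sum_k dot (v i) (v k) = dot (v i) (v i).
  rewrite (bigD1 i) //= big1 ?addr0 // => k ki; apply: orth; by rewrite eq_sym.
rewrite Hu mulmx_suml dot_suml dot_suml mulr_sumr; apply: ler_sum => i _.
rewrite !dot_sumr veig.
under eq_bigr do rewrite dotZl.
rewrite -mulr_sumr D; apply: ler_wpM2r; [exact: dot_ge0 | exact: lemu].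
Qed.

End Ray.


Section Geo.
Variable R : realFieldType.

Lemma char_poly_conj n (A U : 'M[R]_n) : U \in unitmx ->
  char_poly (U *m A *m invmx U) = char_poly A.
Proof.
move=> Uu.
have E : char_poly_mx (U *m A *m invmx U) =
   map_mx polyC U *m char_poly_mx A *m map_mx polyC (invmx U).
  rewrite /char_poly_mx !map_mxM mulmxBr mulmxBl mul_mx_scalar -scalemxAl.
  congr (_ - _).
 by rewrite -map_mxM (mulmxV Uu) map_mx1 scalemx1.
rewrite /char_poly E !det_mulmx !det_map_mx mulrC mulrA -rmorphM.
by rewrite -det_mulmx mulVmx // det1 rmorph1 mul1r.
Qed.


Lemma geo d (A : 'M[R]_(2 + d)) mu (a b : 'rV[R]_(2 + d)) :
  row_free (col_mx a b) -> a *m A = mu *: a -> b *m A = mu *: b ->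
  (('X - mu%:P) ^+ 2 %| char_poly A).
Proof.
move=> rf aA bA.
set V := col_mx a b in rf.
have VA : V *m A = mu *: V by rewrite /V mul_col_mx aA bA scale_col_mx.
have rV : \rank V = 2%N by apply/eqP.
have EV := mulmx_ebase V; rewrite rV in EV.
have Lu := col_ebase_unit V; have Uu := row_ebase_unit V.
set L := col_ebase V in EV Lu; set U := row_ebase V in EV Uu.
set A' := U *m A *m invmx U.
have PA : pid_mx 2 *m A' = mu *: (pid_mx 2 : 'M_(2, 2 + d)).
  have : L *m pid_mx 2 *m U *m A = mu *: (L *m pid_mx 2 *m U) by rewrite EV.
  rewrite -!mulmxA scalemxAr => /(congr1 (mulmx (invmx L))).
  rewrite !(mulKmx Lu) => /(congr1 (mulmx^~ (invmx U))).
  by rewrite /A' -scalemxAl !mulmxA (mulmxK Uu).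
have [ul ur] : ulsubmx A' = mu%:M /\ ursubmx A' = 0.
  move: PA; rewrite -[A'](submxK) pid_mx_row mul_row_block !mul1mx !mul0mx.
  rewrite !addr0 scale_row_mx scaler0 scalemx1 => /eq_row_mx [-> ->].
  by rewrite block_mxKul block_mxKur.
rewrite -(char_poly_conj A Uu) -/A' -[A']submxK ul ur.
rewrite /char_poly /char_poly_mx map_block_mx /= !map_mx0 scalar_mx_block.
rewrite opp_block_mx add_block_mx oppr0 addr0 det_lblock.
apply: dvdp_mulr.
rewrite [X in _ %| X](_ : _ = char_poly (mu%:M : 'M_2)) //.
rewrite char_poly_trig ?scalar_mx_is_trig // !big_ord_recr big_ord0 /= !mxE /=.
by rewrite mul1r expr2.
Qed.

End Geo.


Section D.
Variable R : realFieldType.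

Lemma quad (a b : R) : 0 <= b -> (forall t, 0 <= 2 * t * a + t ^+ 2 * b) -> a = 0.
Proof.
move=> b0 H.
have hb : b + 1 != 0 by rewrite gt_eqF // ltr_pwDr.
have [t ht] : exists t, a = - t * (b + 1).
  by exists (- a / (b + 1)); rewrite mulNr divfK // opprK.
have := H t; rewrite ht => h.
have t0 : t = 0 by nra.
by rewrite t0 oppr0 mul0r.
Qed.

Lemma psd_rad n (M : 'M[R]_n) (w : 'rV[R]_n) : M^T = M ->
  (forall z, 0 <= dot (z *m M) z) -> dot (w *m M) w = 0 -> w *m M = 0.
Proof.
move=> sM psd w0; set z := w *m M.
have a0 : dot z z = 0.
  apply: (@quad _ (dot (z *m M) z)) => [|t]; first exact: psd.
  have := psd (w + t *: z).
  rewrite mulmxDl -scalemxAl !dotDl !dotDr !dotZl !dotZr -/z w0.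
  rewrite (dotA z w sM) -/z.
  suff -> : 2 * t * dot z z + t ^+ 2 * dot (z *m M) z =
    0 + t * dot z z + (t * dot z z + t * (t * dot (z *m M) z)) by [].
  ring.
exact: (dot_eq0 a0).
Qed.


Lemma basis_perp n (E : 'M[R]_n) : (0 < \rank E)%N ->
  exists (B : 'M[R]_(\rank E, n)) (j : 'I_(\rank E)),
    [/\ row_free B, (B == E)%MS & forall i, i != j -> in_ones_perp (row i B)].
Proof.
move=> r0; set Bb := row_base E.
have fB : row_free Bb := row_base_free E.
have eB : (Bb == E)%MS by apply/eqmxP; exact: eq_row_base.
pose sg i := \sum_k Bb i k.
have perpE (B : 'M[R]_(\rank E, n)) i : in_ones_perp (row i B) = (\sum_k B i k == 0).
  by rewrite /in_ones_perp; congr (_ == 0); apply: eq_bigr => k _; rewrite mxE.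
case: (pickP (fun j => sg j != 0)) => [j sj | H]; last first.
  exists Bb, (Ordinal r0); split => // i _; rewrite perpE.
  by have := H i; rewrite /= => /negbFE.
pose B := \matrix_(i, k) (if i == j then Bb i k else Bb i k + (- (sg i / sg j)) * Bb j k).
have rowB i : row i B = if i == j then row i Bb else row i Bb + (- (sg i / sg j)) *: row j Bb.
  by apply/rowP => k; rewrite !mxE; case: eqP => _; rewrite ?mxE.
have rowBj : row j B = row j Bb by rewrite rowB eqxx.
have BBb : (B == Bb)%MS.
  apply/andP; split; apply/row_subP => i.
    rewrite rowB; case: eqP => _; first exact: row_sub.
    by rewrite addmx_sub ?scalemx_sub ?row_sub.
  case: (eqVneq i j) => [->|ij]; first by rewrite -rowBj row_sub.
  have -> : row i Bb = row i B + (sg i / sg j) *: row j B.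
    by rewrite rowB (negPf ij) rowBj scaleNr addrNK.
  by rewrite addmx_sub ?scalemx_sub ?row_sub.
exists B, j; split.
- by rewrite /row_free (eqmx_rank BBb); exact: fB.
- case/andP: BBb => s1 s2; case/andP: eB => s3 s4.
  by apply/andP; split; [exact: submx_trans s1 s3 | exact: submx_trans s4 s2].
- move=> i ij; rewrite perpE.
  rewrite (eq_bigr (fun k => Bb i k + (- (sg i / sg j)) * Bb j k)); last first.
    by move=> k _; rewrite mxE (negPf ij).
  by rewrite big_split /= -mulr_sumr -/(sg i) -/(sg j) mulNr divfK // subrr.
Qed.

End D.

Unset Implicit Arguments.


Theorem corollary4p5 (R : realType) (d : nat) (e : rel 'I_d.+2)
  (lam : 'I_d.+2 -> R) (k : R) :
  simple_graph e ->
  (forall i j : 'I_d.+2, (i <= j)%N -> lam j <= lam i) ->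
  char_poly (adjmx R e) = \prod_(i < d.+2) ('X - (lam i)%:P) ->
  1 < k ->
  (forall w : 'rV[R]_d.+2, in_ones_perp w -> 0 <= qform (Bbar e k) w) ->
  (exists (w : 'rV[R]_d.+2) (gamma : R),
      [/\ w != 0, in_ones_perp w & w *m (Bbar e k)^T = gamma *: ones R d.+2]) ->
  \det (Bbar e k) = 0 ->
  let lam1 := lam ord0 in
  let lam2 := lam (@Ordinal d.+2 1 isT) in
  (lam1 > lam2 ->
     forall v : 'rV[R]_d.+2, v != 0 -> v *m adjmx R e = lam2 *: v ->
       in_ones_perp v)
  /\
  (lam1 = lam2 ->
     exists (B : 'M[R]_(\rank (eigenspace (adjmx R e) lam2), d.+2)) (j : 'I_(\rank (eigenspace (adjmx R e) lam2))),
       [/\ row_free B, (B == eigenspace (adjmx R e) lam2)%MS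
         & forall i, i != j -> in_ones_perp (row i B)]).
Proof.
move=> [esym eirr] sorted cA k1 psd [w [gamma [wnz wperp wB]]] detB lam1 lam2.
set A := adjmx R e.
have sA : A^T = A by apply/matrixP => i j; rewrite !mxE esym.
have A0 i j : 0 <= A i j by rewrite mxE ler0n.
set c := (k ^+ 2 - 1)^-1.
have c0 : 0 < c by rewrite invr_gt0 subr_gt0 -(expr1n _ 2) ltrXn2r // ltW.
have BE : Bbar e k = c%:M - A by [].
have sB : (Bbar e k)^T = Bbar e k by rewrite BE linearB /= tr_scalar_mx sA.
have rootE x : root (char_poly A) x -> exists i, x = lam i.
  rewrite cA /root horner_prod => /prodf_eq0 [i _].
  by rewrite hornerXsubC subr_eq0 => /eqP ->; exists i.
have eig i : exists2 x : 'rV_d.+2, x *m A = lam i *: x & x != 0.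
  have : eigenvalue A (lam i).
    rewrite eigenvalue_root_char cA /root horner_prod.
    by apply/prodf_eq0; exists i => //; rewrite hornerXsubC subrr.
  by move/eigenvalueP.
have [ic cE] : exists i, c = lam i.
  apply: (rootE c).
  rewrite -(eigenvalue_root_char A c).
  apply/eigenvalueP.
  have : kermx (Bbar e k) != 0.
    by rewrite kermx_eq0 row_free_unit unitmxE detB unitr0.
  case/rowV0Pn => x /sub_kermxP xB xnz; exists x => //.
  move: xB; rewrite BE mulmxBr mul_mx_scalar => /eqP; rewrite subr_eq0 => /eqP.
  by move=> <-.
have sortE (i : 'I_d.+2) : lam i <= lam ord0 by apply: sorted.
split; last first.
  move=> _; apply: basis_perp; rewrite lt0n mxrank_eq0.
  by have [x xA xnz] := eig (@Ordinal d.+2 1 isT); apply/eigenvalueP; exists x.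
move=> lt12 v vnz vA; rewrite /lam1 /lam2 in lt12 vA *.
have Bmul z : z *m Bbar e k = c *: z - z *m A by rewrite BE mulmxBr mul_mx_scalar.
case: (eqVneq ic ord0) => [ic0|icn0].
  exfalso; rewrite ic0 in cE.
  have Bpsd z : 0 <= dot (z *m Bbar e k) z.
    rewrite Bmul dotDl dotNl dotZl subr_ge0 cE.
    by apply: (rayleigh sA cA) => i; exact: sortE.
  have wB0 : dot (w *m Bbar e k) w = 0.
    rewrite -{1}sB wB dotZl dotE (eq_bigr (fun i => w 0 i)); last first.
      by move=> i _; rewrite mxE mul1r.
    by rewrite (eqP wperp) mulr0.
  have wA : w *m A = c *: w.
    by have /eqP := psd_rad sB Bpsd wB0; rewrite Bmul subr_eq0 => /eqP.
  pose p := \row_i (if 0 <= w 0 i then w 0 i else 0).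
  have p0 i : 0 <= p 0 i by rewrite mxE; case: ifP.
  have wp i : w 0 i <= p 0 i.
    by rewrite mxE; case: ifP => // /negbT; rewrite -ltNge => /ltW.
  have pw i : p 0 i * w 0 i = p 0 i * p 0 i.
    by rewrite mxE; case: ifP => _; rewrite ?mul0r.
  have pB : dot (p *m Bbar e k) p <= 0.
    rewrite Bmul dotDl dotNl dotZl subr_le0.
    have -> : c * dot p p = \sum_j (\sum_i w 0 i * A i j) * p 0 j.
      rewrite dotE mulr_sumr; apply: eq_bigr => j _.
      rewrite -pw [p 0 j * w 0 j]mulrC mulrA; congr (_ * _).
      by have := congr1 (fun M : 'rV[R]_d.+2 => M 0 j) wA; rewrite !mxE => ->.
    rewrite dotE; apply: ler_sum => j _; apply: ler_wpM2r; first exact: p0.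
    by rewrite mxE; apply: ler_sum => i _; apply: ler_wpM2r.
  have pA : p *m A = c *: p.
    have pB0 : p *m Bbar e k = 0.
      by apply: (psd_rad sB Bpsd); apply/eqP; rewrite eq_le pB Bpsd.
    by move/eqP: pB0; rewrite Bmul subr_eq0 => /eqP.
  have sp : 0 < \sum_i p 0 i.
    rewrite lt_def sumr_ge0 // andbT; apply/eqP => s0.
    have pz i : p 0 i = 0.
      by apply: (psumr_eq0P (P := predT) (F := fun i => p 0 i)) => // j _.
    have wz i : - w 0 i = 0.
      apply: (psumr_eq0P (P := predT) (F := fun i => - w 0 i)) => //.
        by move=> j _; rewrite oppr_ge0 -(pz j).
      by rewrite sumrN (eqP wperp) oppr0.
    move/eqP: wnz; apply; apply/rowP => i; rewrite mxE.
    by apply/eqP; rewrite -oppr_eq0 wz.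
  have rf : row_free (col_mx p w).
    apply: inj_row_free => x; rewrite -[x]hsubmxK mul_row_col.
    rewrite (mx11_scalar (lsubmx x)) (mx11_scalar (rsubmx x)) !mul_scalar_mx.
    move=> H.
    have x10 : lsubmx x 0 0 = 0.
      have := congr1 (fun M : 'rV_(d.+2) => \sum_i M 0 i) H.
      rewrite /= (eq_bigr (fun i => lsubmx x 0 0 * p 0 i + rsubmx x 0 0 * w 0 i)).
        rewrite big_split /= -!mulr_sumr (eqP wperp) mulr0 addr0.
        rewrite [X in _ = X]big1 => [|i _]; last by rewrite mxE.
        by move/eqP; rewrite mulf_eq0 (gt_eqF sp) orbF => /eqP.
      by move=> i _; rewrite !mxE.
    rewrite x10 scale0r add0r in H.
    have x20 : rsubmx x 0 0 = 0.
      by move/eqP: H; rewrite scaler_eq0 (negPf wnz) orbF => /eqP.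
    by rewrite x10 x20 !raddf0 row_mx0.
  have dv := geo rf pA wA.
  rewrite cA big_ord_recl cE expr2 dvdp_mul2l ?polyXsubC_eq0 // in dv.
  rewrite dvdp_XsubCl /root horner_prod in dv.
  move/prodf_eq0: dv => [i _]; rewrite hornerXsubC subr_eq0 => /eqP ei.
  have : lam (lift ord0 i) <= lam (@Ordinal d.+2 1 isT) by apply: sorted; rewrite lift0.
  by rewrite -ei; move/(lt_le_trans lt12); rewrite ltxx.
have ic1 : (1 <= ic)%N.
  by rewrite lt0n; apply/eqP => h; move/eqP: icn0; apply; exact: val_inj.
have cle : c <= lam (@Ordinal d.+2 1 isT) by rewrite cE; apply: sorted.
have [x1 x1A x1nz] := eig ord0.
apply: contraT => snz.
set s := \sum_i v 0 i in snz; set s1 := \sum_i x1 0 i.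
set u := s *: x1 - s1 *: v.
have up : in_ones_perp u.
  rewrite /in_ones_perp (eq_bigr (fun i => s * x1 0 i - s1 * v 0 i)); last first.
    by move=> i _; rewrite !mxE.
  by rewrite sumrB -!mulr_sumr -/s -/s1 mulrC subrr.
have := psd u up; rewrite /qform.
change (0 <= dot (u *m Bbar e k) u -> false).
have orth : dot x1 v = 0.
  by apply: (eig_orth sA x1A vA); rewrite (gt_eqF lt12).
have uB : u *m Bbar e k = (s * (c - lam ord0)) *: x1
     - (s1 * (c - lam (@Ordinal d.+2 1 isT))) *: v.
  rewrite Bmul /u mulmxBl -!scalemxAl x1A vA.
  by apply/rowP => i; rewrite !mxE; ring.
rewrite uB /u !(dotDl, dotDr, dotNl, dotNr, dotZl, dotZr) orth (dotC v x1) orth.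
have X0 : 0 < dot x1 x1.
  rewrite lt_def dot_ge0 andbT; apply/eqP => h.
  by move/eqP: x1nz; apply; apply: dot_eq0.
have V0 := dot_ge0 v.
have s2 : 0 < s ^+ 2 by rewrite lt_def sqr_ge0 andbT expf_neq0.
have h1 : 0 < (lam ord0 - c) * (s ^+ 2 * dot x1 x1).
  by rewrite mulr_gt0 ?subr_gt0 ?(le_lt_trans cle lt12) // mulr_gt0.
have h2 : 0 <= (lam (@Ordinal d.+2 1 isT) - c) * (s1 ^+ 2 * dot v v).
  by rewrite mulr_ge0 ?subr_ge0 // mulr_ge0 ?sqr_ge0.
move=> H; have : 0 < 0 :> R.
  apply: (lt_le_trans h1); move: H h2; set a := lam ord0; set b := lam _.
  move=> H h2; nra.
by rewrite ltxx.
Qed.
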